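(* Let $(X,d)$ be a complete metric space with $|X|\geqslant 3$ and let $T\colon X\to X$ be continuous and asymptotically regular. Suppose there exist an upper semi-continuous function $\varphi\colon[0,\infty)\to[0,\infty)$ with $\varphi(t)<t$ for all $t>0$, and a function $F\colon[0,\infty)^3\to[0,\infty)$ with $F(0,0,0)=0$ and $F$ continuous at $(0,0,0)$, such that $$d(Tx,Ty)+d(Ty,Tz)+d(Tx,Tz)\leqslant \varphi\big(\max\{d(x,y),d(y,z),d(z,x)\}\big)+F\big(d(x,Tx),d(y,Ty),d(z,Tz)\big)$$ for all pairwise distinct $x,y,z\in X$. Then $T$ has a fixed point, and $T$ has at most two fixed points.
   Context: A mapping $T\colon X\to X$ on a metric space is asymptotically regular if $\lim_{n\to\infty}d(T^{n+1}x,T^nx)=0$ for every $x\in X$. *)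

(* Defs.v *)
From Stdlib Require Import Reals.
Open Scope R_scope.

Definition is_metric {X : Type} (d : X -> X -> R) : Prop :=
  (forall x y, 0 <= d x y) /\
  (forall x y, d x y = 0 <-> x = y) /\
  (forall x y, d x y = d y x) /\
  (forall x y z, d x z <= d x y + d y z).

Definition cauchy_seq {X : Type} (d : X -> X -> R) (u : nat -> X) : Prop :=
  forall eps, 0 < eps -> exists N, forall m n, (N <= m)%nat -> (N <= n)%nat -> d (u m) (u n) < eps.

Definition seq_converges_to {X : Type} (d : X -> X -> R) (u : nat -> X) (l : X) : Prop :=
  forall eps, 0 < eps -> exists N, forall n, (N <= n)%nat -> d (u n) l < eps.

Definition complete_metric {X : Type} (d : X -> X -> R) : Prop :=
  forall u : nat -> X, cauchy_seq d u -> exists l, seq_converges_to d u l.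

Definition metric_continuous {X : Type} (d : X -> X -> R) (T : X -> X) : Prop :=
  forall x eps, 0 < eps -> exists delta, 0 < delta /\
    forall y, d x y < delta -> d (T x) (T y) < eps.

Definition asymptotically_regular {X : Type} (d : X -> X -> R) (T : X -> X) : Prop :=
  forall x, Un_cv (fun n => d (Nat.iter (S n) T x) (Nat.iter n T x)) 0.

Definition usc_on_nonneg (phi : R -> R) : Prop :=
  forall t, 0 <= t -> forall eps, 0 < eps -> exists delta, 0 < delta /\
    forall s, 0 <= s -> Rabs (s - t) < delta -> phi s < phi t + eps.

Definition continuous_at_origin3 (F : R -> R -> R -> R) : Prop :=
  forall eps, 0 < eps -> exists delta, 0 < delta /\
    forall a b c, 0 <= a -> 0 <= b -> 0 <= c -> a < delta -> b < delta -> c < delta ->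
      Rabs (F a b c - F 0 0 0) < eps.

(* Main.v *)
Require Import Defs.
From Stdlib Require Import Reals.
From Stdlib Require Import Lra Lia Classical.
Open Scope R_scope.

Lemma min_exists (P : nat -> Prop) : forall k, P k -> exists k0, P k0 /\ forall j, (j < k0)%nat -> ~ P j.
Proof.
  induction k as [k IH] using (well_founded_induction Wf_nat.lt_wf).
  intros Hk.
  destruct (classic (exists j, (j < k)%nat /\ P j)) as [[j [Hj Pj]]|Hn].
  - exact (IH j Hj Pj).
  - exists k; split; auto. intros j Hj Pj. apply Hn; eauto.
Qed.

Lemma small_zero (a : R) : 0 <= a -> (forall e, 0 < e -> a < e) -> a = 0.
Proof.
  intros H0 H. destruct (Rle_lt_or_eq_dec 0 a H0) as [Hp|Hp]; [|auto].
  specialize (H a Hp). lra.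
Qed.

Theorem theorem4p11 (X : Type) (d : X -> X -> R) (T : X -> X)
  (phi : R -> R) (F : R -> R -> R -> R)
  (Hmet : is_metric d) (Hcomp : complete_metric d)
  (H3 : exists a b c : X, a <> b /\ b <> c /\ a <> c)
  (Hcont : metric_continuous d T) (Hreg : asymptotically_regular d T)
  (Hphi_nonneg : forall t, 0 <= t -> 0 <= phi t)
  (Hphi_usc : usc_on_nonneg phi)
  (Hphi_lt : forall t, 0 < t -> phi t < t)
  (HF_nonneg : forall a b c, 0 <= a -> 0 <= b -> 0 <= c -> 0 <= F a b c)
  (HF0 : F 0 0 0 = 0)
  (HF_cont : continuous_at_origin3 F)
  (Hcontr : forall x y z, x <> y -> y <> z -> x <> z ->
     d (T x) (T y) + d (T y) (T z) + d (T x) (T z) <=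
     phi (Rmax (d x y) (Rmax (d y z) (d z x))) + F (d x (T x)) (d y (T y)) (d z (T z))) :
  (exists x, T x = x) /\
  (forall x y z, T x = x -> T y = y -> T z = z -> x = y \/ y = z \/ x = z).
Proof.
  destruct Hmet as [Hpos [Hzero [Hsym Htri]]].
  split.
  2:{
    intros x y z Hx Hy Hz.
    destruct (classic (x = y)) as [|Hxy]; [auto|].
    destruct (classic (y = z)) as [|Hyz]; [auto|].
    destruct (classic (x = z)) as [|Hxz]; [auto|].
    exfalso.
    pose proof (Hcontr x y z Hxy Hyz Hxz) as Hc.
    rewrite Hx, Hy, Hz in Hc.
    assert (E0 : forall u, d u u = 0) by (intro u; apply Hzero; reflexivity).
    rewrite !E0, HF0 in Hc.
    set (t := Rmax (d x y) (Rmax (d y z) (d z x))).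
    assert (Ht : 0 < t).
    { assert (0 < d x y).
      { destruct (Rle_lt_or_eq_dec 0 _ (Hpos x y)) as [h|h]; auto.
        exfalso; apply Hxy, Hzero; auto. }
      unfold t. eapply Rlt_le_trans; [exact H| apply Rmax_l]. }
    pose proof (Hphi_lt t Ht).
    assert (t <= d x y + d y z + d x z).
    { unfold t. rewrite (Hsym z x).
      pose proof (Hpos x y); pose proof (Hpos y z); pose proof (Hpos x z).
      apply Rmax_lub; [lra|]. apply Rmax_lub; lra. }
    fold t in Hc. lra. }
  destruct H3 as [x0 _].
  set (x := fun n => Nat.iter n T x0).
  assert (xS : forall n, x (S n) = T (x n)) by reflexivity.
  assert (Hr : forall e, 0 < e -> exists N, forall n, (N <= n)%nat -> d (x (S n)) (x n) < e).
  { intros e He. destruct (Hreg x0 e He) as [N HN]. exists N. intros n Hn.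
    specialize (HN n Hn). unfold Rdist in HN. rewrite Rminus_0_r in HN.
    rewrite Rabs_pos_eq in HN by apply Hpos. exact HN. }
  destruct (classic (exists n m, (n < m)%nat /\ x n = x m)) as [[n [m [Hnm Heq]]]|Hinj].
  -
    exists (x n).
    set (p := (m - n)%nat).
    assert (Hp : forall k, x (n + p * k)%nat = x n).
    { induction k as [|k IH].
      - rewrite Nat.mul_0_r, Nat.add_0_r. reflexivity.
      - replace (n + p * S k)%nat with (p * k + m)%nat by (unfold p; lia).
        unfold x. rewrite Nat.iter_add. fold (x m). rewrite <- Heq.
        unfold x. rewrite <- Nat.iter_add. fold (x (p * k + n)%nat).
        rewrite Nat.add_comm. exact IH. }
    apply Hzero.
    rewrite <- xS.
    apply small_zero; [apply Hpos|].
    intros e He. destruct (Hr e He) as [N HN].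
    specialize (HN (n + p * N)%nat).
    rewrite xS, Hp in HN. rewrite <- xS in HN. apply HN.
    assert (1 <= p)%nat by (unfold p; lia). nia.
  - assert (Hi : forall n m, n <> m -> x n <> x m).
    { intros n m Hnm E. apply Hinj.
      destruct (Nat.lt_gt_cases n m) as [[h|h] _]; auto.
      - exists n, m; auto.
      - exists m, n; auto. }
    assert (Hcau : cauchy_seq d x).
    { intros eps Heps. apply NNPP. intro Hne.
      assert (Hne' : forall N, exists n m, (N <= n)%nat /\ (n < m)%nat /\ eps <= d (x m) (x n)).
      { intro N. apply NNPP. intro H. apply Hne. exists N. intros a b Ha Hb.
        apply Rnot_le_lt. intro Hab.
        destruct (Nat.lt_trichotomy a b) as [h|[h|h]].
        - apply H. exists a, b. rewrite Hsym. auto.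
        - subst b. rewrite (proj2 (Hzero (x a) (x a)) eq_refl) in Hab. lra.
        - apply H. exists b, a. auto. }
      pose (g := eps - phi eps).
      assert (Hg : 0 < g) by (pose proof (Hphi_lt eps Heps); unfold g; lra).
      destruct (Hphi_usc eps (Rlt_le _ _ Heps) (g/4)) as [d1 [Hd1 Hu]]; [lra|].
      destruct (HF_cont (g/4)) as [d2 [Hd2 Hf]]; [lra|].
      set (eta := Rmin (Rmin (d1/2) d2) (Rmin (g/4) eps)).
      assert (He1 : eta <= d1/2) by (unfold eta; pose proof (Rmin_l (Rmin (d1/2) d2) (Rmin (g/4) eps)); pose proof (Rmin_l (d1/2) d2); lra).
      assert (He2 : eta <= d2) by (unfold eta; pose proof (Rmin_l (Rmin (d1/2) d2) (Rmin (g/4) eps)); pose proof (Rmin_r (d1/2) d2); lra).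
      assert (He3 : eta <= g/4) by (unfold eta; pose proof (Rmin_r (Rmin (d1/2) d2) (Rmin (g/4) eps)); pose proof (Rmin_l (g/4) eps); lra).
      assert (He4 : eta <= eps) by (unfold eta; pose proof (Rmin_r (Rmin (d1/2) d2) (Rmin (g/4) eps)); pose proof (Rmin_r (g/4) eps); lra).
      assert (He0 : 0 < eta).
      { unfold eta. repeat apply Rmin_glb_lt; lra. }
      destruct (Hr eta He0) as [N HN].
      destruct (Hne' N) as [n [m0 [HNn [Hnm0 Hd0]]]].
      destruct (min_exists (fun k => (n < k)%nat /\ eps <= d (x k) (x n)) m0 (conj Hnm0 Hd0))
        as [m [[Hnm Hdm] Hmin]].
      assert (Hm2 : (S n < m)%nat).
      { destruct (Nat.eq_dec m (S n)) as [E|E]; [|lia].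
        subst m. pose proof (HN n HNn). lra. }
      assert (Hprev : d (x (pred m)) (x n) < eps).
      { apply Rnot_le_lt. intro h. apply (Hmin (pred m)); [lia|]. split; [lia|auto]. }
      assert (Hmm : d (x m) (x (pred m)) < eta).
      { replace m with (S (pred m)) at 1 by lia. apply HN. lia. }
      assert (Hup : d (x m) (x n) < eps + eta).
      { pose proof (Htri (x m) (x (pred m)) (x n)). lra. }
      pose proof (Hcontr (x n) (x m) (x (S n)) (Hi n m ltac:(lia)) (Hi m (S n) ltac:(lia)) (Hi n (S n) ltac:(lia))) as Hc.
      rewrite <- !xS in Hc.
      assert (Q1 : d (x (S n)) (x n) < eta) by (apply HN; lia).
      assert (Q2 : d (x (S m)) (x m) < eta) by (apply HN; lia).
      assert (Q3 : d (x (S (S n))) (x (S n)) < eta) by (apply HN; lia).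
      assert (L : eps - 2 * eta < d (x (S n)) (x (S m))).
      { pose proof (Htri (x m) (x (S m)) (x n)).
        pose proof (Htri (x (S m)) (x (S n)) (x n)).
        rewrite (Hsym (x m) (x (S m))) in *.
        rewrite (Hsym (x (S m)) (x (S n))) in *. lra. }
      pose proof (Hpos (x (S m)) (x (S (S n)))).
      pose proof (Hpos (x (S n)) (x (S (S n)))).
      set (t := Rmax (d (x n) (x m)) (Rmax (d (x m) (x (S n))) (d (x (S n)) (x n)))) in Hc.
      assert (Ht1 : eps <= t).
      { unfold t. rewrite Hsym. eapply Rle_trans; [exact Hdm| apply Rmax_l]. }
      assert (Ht2 : t < eps + 2 * eta).
      { unfold t. pose proof (Htri (x m) (x n) (x (S n))).
        rewrite (Hsym (x n) (x m)). rewrite (Hsym (x n) (x (S n))) in H1.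
        apply Rmax_lub_lt; [lra|]. apply Rmax_lub_lt; lra. }
      assert (P : phi t < phi eps + g/4).
      { apply Hu; [lra|]. rewrite Rabs_pos_eq; lra. }
      assert (FF : F (d (x n) (x (S n))) (d (x m) (x (S m))) (d (x (S n)) (x (S (S n)))) < g/4).
      { rewrite (Hsym (x n) (x (S n))), (Hsym (x m) (x (S m))), (Hsym (x (S n)) (x (S (S n)))). 
        pose proof (Hf (d (x (S n)) (x n)) (d (x (S m)) (x m)) (d (x (S (S n))) (x (S n))) (Hpos _ _) (Hpos _ _) (Hpos _ _) ltac:(lra) ltac:(lra) ltac:(lra)) as h.
        rewrite HF0, Rminus_0_r in h. pose proof (Rle_abs (F (d (x (S n)) (x n)) (d (x (S m)) (x m)) (d (x (S (S n))) (x (S n))))). lra. }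
      unfold g in *. lra. }
    destruct (Hcomp x Hcau) as [l Hl].
    exists l. apply Hzero. apply small_zero; [apply Hpos|].
    intros e He.
    destruct (Hcont l (e/2)) as [dl [Hdl Hcl]]; [lra|].
    destruct (Hl (Rmin dl (e/2))) as [N HN]; [apply Rmin_glb_lt; lra|].
    pose proof (HN N (le_n N)) as h1. pose proof (HN (S N) (le_S _ _ (le_n N))) as h2.
    pose proof (Rmin_l dl (e/2)). pose proof (Rmin_r dl (e/2)).
    assert (h3 : d (T l) (T (x N)) < e/2) by (apply Hcl; rewrite Hsym; lra).
    rewrite <- xS in h3.
    pose proof (Htri (T l) (x (S N)) l). lra.
Qed.
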